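(* There exists an invertible $24\times24$ binary matrix $A$ such that the linear kernel $g({\bf u})={\bf u}A$ has partial distance sequence $(1,2,2,2,2,2,4,4,4,4,4,4,8,8,8,8,8,8,8,12,12,12,16,16)$. Consequently $E_{24}\ge\frac1{24}\sum_{i=0}^{23}\log_{24}D_{min}^{(i)}\approx0.51577$.
   Context: A kernel of dimension $\ell$ is a bijection $g:\{0,1\}^\ell\to\{0,1\}^\ell$; a linear kernel is $g({\bf u})={\bf u}G$ over $\mathbb{F}_2$ for an invertible $\ell\times\ell$ binary matrix $G$. ${\bf a}\bullet{\bf b}$ denotes concatenation, $d_H$ Hamming distance. Partial distances: $D_{min}^{(i)}=\min\{d_H(g({\bf w}\bullet 0\bullet{\bf u}),g({\bf w}\bullet 1\bullet {\bf v})) : {\bf w}\in\{0,1\}^i,\ {\bf u},{\bf v}\in\{0,1\}^{\ell-i-1}\}$, $i=0,\dots,\ell-1$; exponent $E(g)=\frac1\ell\sum_{i}\log_\ell D_{min}^{(i)}$; $E_\ell=\max_g E(g)$ over all kernels of dimension $\ell$. *)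

(* Defs.v *)
From HB Require Import structures.
From mathcomp Require Import all_boot all_order all_algebra.
From Stdlib Require Import Rdefinitions Raxioms RIneq Rfunctions Rpower.

Set Implicit Arguments.
Unset Strict Implicit.
Unset Printing Implicit Defensive.

Definition bitvec (l : nat) := 'rV['F_2]_l.

Definition dH (l : nat) (x y : bitvec l) : nat :=
  #|[set j : 'I_l | x ord0 j != y ord0 j]|.

(* x = w • a • u for some w of length i, i.e. x and y agree on the first i
   coordinates, x has 0 at position i and y has 1 at position i. *)
Definition pd_pair (l : nat) (i : nat) (x y : bitvec l) : bool :=
  [forall j : 'I_l, (j < i)%N ==> (x ord0 j == y ord0 j)] &&
  [forall j : 'I_l, (nat_of_ord j == i) ==> ((x ord0 j == @GRing.zero 'F_2) && (y ord0 j == @GRing.one 'F_2))].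

(* Partial distance D_min^(i) of a kernel g (the set of pairs is nonempty for
   i < l; the default l is an upper bound on all Hamming distances). *)
Definition partial_distance (l : nat) (g : bitvec l -> bitvec l) (i : nat) : nat :=
  \big[minn/l]_(p : bitvec l * bitvec l | pd_pair i p.1 p.2) dH (g p.1) (g p.2).

Definition logb (l x : R) : R := Rdiv (ln x) (ln l).

Definition exponent_of_seq (l : nat) (D : nat -> nat) : R :=
  Rmult (Rinv (INR l)) (\big[Rplus/R0]_(i < l) logb (INR l) (INR (D i))).

Definition kernel_exponent (l : nat) (g : bitvec l -> bitvec l) : R :=
  exponent_of_seq l (partial_distance g).

Definition is_max_exponent (l : nat) (M : R) : Prop :=
  (exists g : bitvec l -> bitvec l, bijective g /\ M = kernel_exponent g) /\
  (forall g : bitvec l -> bitvec l, bijective g -> Rle (kernel_exponent g) M).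

Definition pd24 : seq nat :=
  [:: 1; 2; 2; 2; 2; 2; 4; 4; 4; 4; 4; 4; 8; 8; 8; 8; 8; 8; 8; 12; 12; 12; 16; 16]%N.

(* Main.v *)
Require Import Defs.
From HB Require Import structures.
From mathcomp Require Import all_boot all_order all_algebra.
From Stdlib Require Import Rdefinitions Raxioms RIneq Rfunctions Rpower.

Set Implicit Arguments.
Unset Strict Implicit.
Unset Printing Implicit Defensive.
Import GRing.Theory.

Local Open Scope ring_scope.

Definition b2F (b : bool) : 'F_2 := b%:R.

Lemma F2cases (x : 'F_2) : x = 0 \/ x = 1.
Proof. case: x => [[|[|m]]] H; [left|right|by []]; exact/val_inj. Qed.

Lemma F2_11 : (1 + 1 : 'F_2) = 0. Proof. exact/val_inj. Qed.

Lemma b2F_neq0 b : (b2F b != 0) = b.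
Proof. by case: b; rewrite /b2F ?oner_neq0 ?eqxx. Qed.

Lemma b2FD a b : b2F a + b2F b = b2F (a (+) b).
Proof. by case: a; case: b; rewrite /b2F /= ?add0r ?addr0 ?F2_11. Qed.

Lemma b2FM a b : b2F a * b2F b = b2F (a && b).
Proof. by case: a; case: b; rewrite /b2F /= ?mul0r ?mulr0 ?mulr1. Qed.

Lemma F2addneq (x y : 'F_2) : (x + y != 0) = (x != 0) (+) (y != 0).
Proof.
case: (F2cases x) => ->; case: (F2cases y) => ->;
  by rewrite ?add0r ?addr0 ?F2_11 ?eqxx ?oner_neq0.
Qed.

Definition tbl (t : seq (seq bool)) (i j : nat) : bool := nth false (nth [::] t i) j.

Definition mkM (t : seq (seq bool)) : 'M['F_2]_24 :=
  \matrix_(i < 24, j < 24) b2F (tbl t i j).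

Lemma sum_b2F (s : seq nat) (f : nat -> bool) :
  \sum_(j <- s) b2F (f j) = b2F (odd (count f s)).
Proof.
elim: s => [|a s IH]; first by rewrite big_nil.
by rewrite big_cons IH b2FD /= oddD; case: (f a).
Qed.

Definition mulok (a b : seq (seq bool)) : bool :=
  all (fun i => all (fun k =>
     odd (count (fun j => tbl a i j && tbl b j k) (iota 0 24)) == (i == k))
     (iota 0 24)) (iota 0 24).

Lemma mulokP a b : mulok a b -> mkM a *m mkM b = 1%:M.
Proof.
move=> H; apply/matrixP => i k; rewrite !mxE.
have -> : \sum_(j < 24) mkM a i j * mkM b j k =
          \sum_(0 <= j < 24) b2F (tbl a i j && tbl b j k).
  by rewrite big_mkord; apply: eq_bigr => j _; rewrite !mxE b2FM.
rewrite sum_b2F.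
move/allP: H => /(_ i); rewrite mem_iota ltn_ord => /(_ isT).
move/allP => /(_ k); rewrite mem_iota ltn_ord => /(_ isT) /eqP ->.
by rewrite -(inj_eq val_inj).
Qed.

Definition bits (z : 'rV['F_2]_24) : seq bool := [seq z 0 j != 0 | j <- enum 'I_24].
Definition wt (z : 'rV['F_2]_24) : nat := #|[set j : 'I_24 | z 0 j != 0]|.

Lemma wt_bits z : wt z = count id (bits z).
Proof.
rewrite /wt /bits count_map cardE {1}/enum_mem -enumT size_filter.
by apply: eq_count => j; rewrite /= inE.
Qed.

Fixpoint xorl (a b : seq bool) : seq bool :=
  match a, b with x :: a', y :: b' => (x (+) y) :: xorl a' b' | _, _ => [::] end.

Lemma xorl_map (T : Type) (f g : T -> bool) s :
  xorl (map f s) (map g s) = map (fun x => f x (+) g x) s.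
Proof. by elim: s => //= a s ->. Qed.

Lemma bitsD u v : bits (u + v) = xorl (bits u) (bits v).
Proof. by rewrite /bits xorl_map; apply: eq_map => j; rewrite mxE F2addneq. Qed.

Fixpoint chk (acc : seq bool) (rs : seq (seq bool)) (d : nat) : bool :=
  match rs with
  | [::] => leq d (count id acc)
  | r :: rs' => chk acc rs' d && chk (xorl acc r) rs' d
  end.

Section Mat.
Variable t : seq (seq bool).
Let A := mkM t.
Definition trow (i : nat) : seq bool := [seq tbl t i k | k <- iota 0 24].

Lemma bits_row (i : 'I_24) : bits (row i A) = trow i.
Proof.
rewrite /bits /trow -val_enum_ord -map_comp; apply: eq_map => k.
by rewrite /= !mxE b2F_neq0.
Qed.

Lemma chkP (js : seq 'I_24) (c : 'I_24 -> 'F_2) acc (d : nat) :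
  chk (bits acc) [seq trow (nat_of_ord j) | j <- js] d ->
  leq d (wt (acc + \sum_(j <- js) c j *: row j A)).
Proof.
elim: js acc => [|j js IH] acc /=.
  by rewrite big_nil addr0 wt_bits.
case/andP=> H0 H1; rewrite big_cons.
case: (F2cases (c j)) => ->.
  by rewrite scale0r add0r; apply: IH.
by rewrite scale1r addrA; apply: IH; rewrite bitsD bits_row.
Qed.

Fixpoint par (l : seq bool) : bool := if l is b :: l' then b (+) par l' else false.

Lemma par_xorl a b : size a = size b -> par (xorl a b) = par a (+) par b.
Proof.
elim: a b => [|x a IH] [|y b] //= [] /IH ->.
by case: x; case: y; case: (par a); case: (par b).
Qed.

Lemma size_bits z : size (bits z) = 24%nat.
Proof. by rewrite /bits size_map size_enum_ord. Qed.

Lemma odd_par l : odd (count id l) = par l.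
Proof. by elim: l => //= b l <-; rewrite oddD; case: b. Qed.

Lemma parP (js : seq 'I_24) (c : 'I_24 -> 'F_2) acc :
  (forall j, j \in js -> ~~ par (trow (nat_of_ord j))) ->
  par (bits (acc + \sum_(j <- js) c j *: row j A)) = par (bits acc).
Proof.
elim: js acc => [|j js IH] acc H.
  by rewrite big_nil addr0.
rewrite big_cons.
have H' : forall j, j \in js -> ~~ par (trow (nat_of_ord j)).
  by move=> k kin; apply: H; rewrite in_cons kin orbT.
case: (F2cases (c j)) => ->.
  by rewrite scale0r add0r; apply: IH.
rewrite scale1r addrA IH // bitsD par_xorl ?size_bits // bits_row.
by move: (H j (mem_head _ _)) => /negbTE ->; rewrite addbF.
Qed.

Lemma decomp (c : 'rV['F_2]_24) (i : 'I_24) :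
  (forall j : 'I_24, ((nat_of_ord j < nat_of_ord i)%nat) -> c 0 j = 0) ->
  c *m A = c 0 i *: row i A +
    \sum_(j <- [seq j : 'I_24 <- enum 'I_24 | (nat_of_ord i < nat_of_ord j)%nat]) c 0 j *: row j A.
Proof.
move=> H; rewrite mulmx_sum_row (bigID (fun j : 'I_24 => (nat_of_ord i < nat_of_ord j)%nat)) /= addrC.
rewrite big_filter big_enum_cond /=; congr (_ + _); last first.
rewrite (bigD1 i) ?ltnn //= big1 ?addr0 // => j /andP[].
rewrite -leqNgt => le ne.
have lt : (nat_of_ord j < nat_of_ord i)%nat by rewrite ltn_neqAle le andbT.
by rewrite H ?scale0r.
Qed.

End Mat.
Definition Atbl : seq (seq bool) :=
  [:: [:: true; false; false; false; false; false; false; false; false; false; false; false; false; false; false; false; false; false; false; false; false; false; false; false];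
  [:: false; false; false; false; false; false; false; false; false; false; false; false; true; false; false; false; false; false; false; false; false; false; false; true];
  [:: false; false; false; false; false; false; false; false; false; false; false; false; false; false; false; false; false; false; false; false; true; false; true; false];
  [:: false; false; false; false; false; false; false; false; false; true; false; true; false; false; false; false; false; false; false; false; false; false; false; false];
  [:: false; false; false; false; false; false; true; false; false; false; false; false; false; false; false; false; false; true; false; false; false; false; false; false];
  [:: false; false; true; false; false; false; false; true; false; false; false; false; false; false; false; false; false; false; false; false; false; false; false; false];
  [:: false; false; false; false; false; false; true; false; true; false; true; false; false; false; false; false; false; false; false; false; false; false; false; true];
  [:: true; false; true; false; false; false; false; false; false; false; false; false; false; false; true; false; false; false; false; false; true; false; false; false];
  [:: false; false; false; false; false; false; true; false; false; false; false; false; false; false; false; false; false; true; false; true; false; true; false; false];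
  [:: false; false; false; true; false; false; false; false; false; true; false; false; false; true; false; false; false; true; false; false; false; false; false; false];
  [:: false; false; true; false; false; false; false; false; true; true; false; false; false; false; false; true; false; false; false; false; false; false; false; false];
  [:: false; false; false; false; true; false; false; false; true; false; false; false; false; true; false; false; false; false; false; true; false; false; false; false];
  [:: false; false; false; true; false; true; false; true; true; true; false; false; false; true; true; false; false; false; false; false; false; false; false; true];
  [:: false; false; false; true; false; false; false; true; false; false; true; false; true; true; false; false; true; false; false; false; false; false; true; true];
  [:: false; false; false; false; true; true; false; false; true; false; true; true; false; false; false; true; false; true; false; false; false; false; true; false];
  [:: false; false; false; true; false; false; false; false; true; false; true; true; false; true; true; true; true; false; false; false; false; false; false; false];
  [:: false; true; true; false; false; false; true; true; true; false; true; true; false; false; false; true; false; false; false; false; false; false; false; false];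
  [:: false; true; true; false; true; true; false; false; false; false; true; false; false; false; true; true; true; false; false; false; false; false; false; false];
  [:: false; true; true; true; false; false; false; false; false; false; false; true; true; false; true; true; false; false; false; false; true; false; false; false];
  [:: false; true; true; false; true; true; true; false; false; true; true; false; false; false; true; false; false; true; true; false; true; false; false; true];
  [:: false; true; true; false; false; true; true; true; false; false; false; true; true; false; false; true; false; true; false; true; true; true; false; false];
  [:: false; false; true; false; false; true; true; true; true; false; false; false; false; true; true; false; true; false; true; true; false; true; false; true];
  [:: false; true; true; true; true; false; true; true; true; true; false; false; true; true; false; true; false; false; true; true; true; false; true; true];
  [:: true; false; true; true; true; true; false; false; true; false; true; true; true; false; true; false; true; true; true; true; true; true; false; false]].

Definition Btbl : seq (seq bool) :=
  [:: [:: true; false; false; false; false; false; false; false; false; false; false; false; false; false; false; false; false; false; false; false; false; false; false; false];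
  [:: true; true; true; true; true; false; false; true; false; true; true; true; false; true; true; true; false; true; false; false; true; true; true; false];
  [:: true; true; true; true; false; true; false; true; false; false; true; false; false; true; false; true; false; false; false; false; false; false; false; false];
  [:: true; true; false; false; false; true; true; true; false; false; false; false; false; false; false; false; true; false; true; false; false; false; false; false];
  [:: true; false; false; true; false; true; true; true; true; true; true; true; false; true; false; true; false; true; false; false; false; true; true; false];
  [:: true; true; true; false; true; true; false; false; false; true; true; false; false; false; true; false; false; false; false; false; false; true; false; true];
  [:: true; true; false; true; false; true; false; true; true; false; true; true; true; false; true; false; false; true; false; false; false; true; true; false];
  [:: true; true; true; true; false; false; false; true; false; false; true; false; false; true; false; true; false; false; false; false; false; false; false; false];
  [:: true; false; true; true; true; false; true; false; false; false; true; true; true; true; true; false; false; false; false; false; true; false; true; true];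
  [:: true; false; true; false; false; true; true; false; true; false; false; false; false; false; true; false; true; true; true; true; false; false; false; true];
  [:: true; true; false; false; true; true; false; true; true; true; false; false; true; false; false; false; true; false; false; false; true; false; false; false];
  [:: true; false; true; true; false; true; true; false; true; false; false; false; false; false; true; false; true; true; true; true; false; false; false; true];
  [:: true; true; true; false; false; false; false; false; false; true; false; false; true; true; false; false; true; true; false; false; false; true; false; true];
  [:: true; false; true; true; true; true; false; false; false; true; true; true; true; false; false; false; false; false; false; true; false; true; true; true];
  [:: true; true; false; true; true; false; true; false; true; true; false; false; false; true; true; true; true; false; false; false; true; true; false; true];
  [:: true; true; true; false; true; false; false; true; true; false; true; true; true; false; false; true; true; true; true; true; true; false; true; false];
  [:: true; false; false; false; true; false; false; true; false; true; true; true; false; false; true; true; true; false; true; true; false; false; true; false];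
  [:: true; true; false; true; true; true; false; true; true; false; true; true; true; false; true; false; false; true; false; false; false; true; true; false];
  [:: true; true; false; false; false; false; false; false; true; true; true; false; false; true; true; false; true; false; true; false; false; false; false; true];
  [:: true; false; false; true; false; false; false; true; true; false; true; false; false; false; true; true; false; true; false; true; true; false; true; false];
  [:: true; false; true; false; true; true; true; false; true; true; true; false; false; false; true; false; true; false; false; false; true; true; false; true];
  [:: true; false; false; true; true; false; false; true; false; false; true; false; false; false; true; true; false; true; false; true; true; false; true; false];
  [:: true; false; false; false; true; true; true; false; true; true; true; false; false; false; true; false; true; false; false; false; true; true; false; true];
  [:: true; false; true; false; false; false; false; false; false; true; false; false; true; true; false; false; true; true; false; false; false; true; false; true]].

Definition A24 := mkM Atbl.
Definition B24 := mkM Btbl.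

Lemma A_unit : A24 \in unitmx.
Proof.
have h : mulok Atbl Btbl by vm_compute.
by case: (mulmx1_unit (mulokP h)).
Qed.

Definition filt (i : nat) := [seq k <- iota 0 24 | (i < k)%nat].

Lemma chk_all_ok :
  all (fun i => chk (trow Atbl i) [seq trow Atbl k | k <- filt i] (nth 0%nat pd24 i)) (iota 6 18).
Proof. vm_compute. reflexivity. Qed.
Lemma par_all_ok : all (fun k => ~~ par (trow Atbl k)) (iota 1 23).
Proof. vm_compute. reflexivity. Qed.
Lemma wt_all_ok : all (fun i => count id (trow Atbl i) == nth 0%nat pd24 i) (iota 0 24).
Proof. vm_compute. reflexivity. Qed.

Lemma chk_i (i : nat) : (6 <= i < 24)%nat ->
  chk (trow Atbl i) [seq trow Atbl k | k <- filt i] (nth 0%nat pd24 i).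
Proof. move=> h; move/allP: chk_all_ok => /(_ i); apply; rewrite mem_iota; exact h. Qed.

Lemma par_i (k : nat) : (1 <= k < 24)%nat -> ~~ par (trow Atbl k).
Proof. move=> h; move/allP: par_all_ok => /(_ k); apply; rewrite mem_iota; exact h. Qed.

Lemma wt_i (i : nat) : (i < 24)%nat -> count id (trow Atbl i) = nth 0%nat pd24 i.
Proof. move=> h; apply/eqP; move/allP: wt_all_ok => /(_ i); apply; rewrite mem_iota; exact h. Qed.

Lemma map_filt (t : seq (seq bool)) (i : 'I_24) :
  [seq trow t (nat_of_ord j) | j <- [seq j : 'I_24 <- enum 'I_24 | (nat_of_ord i < nat_of_ord j)%nat]]
  = [seq trow t k | k <- filt i].
Proof. by rewrite /filt -val_enum_ord filter_map -map_comp. Qed.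

Lemma wt0 (z : 'rV['F_2]_24) : wt z = 0%nat -> z = 0.
Proof.
rewrite /wt => /eqP; rewrite cards_eq0 => /eqP H; apply/matrixP => a j.
rewrite (ord1 a) mxE; apply/eqP; apply: negbNE; apply/negP => nz.
have : j \in [set j0 : 'I_24 | z 0 j0 != 0] by rewrite inE.
by rewrite H inE.
Qed.

Lemma par_bits0 : par (bits 0) = false.
Proof. by rewrite /bits; elim: (enum 'I_24) => //= j s ->; rewrite mxE eqxx. Qed.

Lemma lb (i : 'I_24) (c : 'rV['F_2]_24) : c 0 i = 1 ->
  (forall j : 'I_24, (nat_of_ord j < nat_of_ord i)%nat -> c 0 j = 0) ->
  (nth 0%nat pd24 i <= wt (c *m A24))%nat.
Proof.
move=> ci H.
have nz : wt (c *m A24) != 0%nat.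
  apply/eqP => /wt0 z0.
  have : c = 0 by rewrite -(mulmxK A_unit c) z0 mul0mx.
  by move/matrixP/(_ 0 i); rewrite ci mxE => /eqP; rewrite oner_eq0.
case: (ltnP i 6) => hi.
  case: (posnP i) => [i0|ipos].
    by rewrite i0 /= lt0n.
  have even : ~~ odd (wt (c *m A24)).
    have H0 : forall j : 'I_24, (nat_of_ord j < nat_of_ord (ord0 : 'I_24))%nat -> c 0 j = 0 by [].
    rewrite (decomp Atbl H0) H // scale0r wt_bits odd_par parP ?par_bits0 //.
    move=> j; rewrite mem_filter => /andP[jpos _].
    by apply: par_i; rewrite jpos (ltn_ord j).
  have -> : nth 0%nat pd24 i = 2%nat.
    by move: hi ipos; case: (nat_of_ord i) => [|[|[|[|[|[|[|]]]]]]].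
  move: nz even; case: (wt _) => [|[|n]] //.
rewrite (decomp Atbl H) ci scale1r; apply: chkP.
rewrite bits_row map_filt.
by apply: chk_i; rewrite hi (ltn_ord i).
Qed.

Lemma dH_wt (x y : 'rV['F_2]_24) : dH x y = wt (y - x).
Proof. by rewrite /dH /wt; apply: eq_card => j; rewrite !inE !mxE subr_eq0 eq_sym. Qed.

Lemma bigmin_le (T : finType) (P : pred T) (F : T -> nat) (x0 : nat) p :
  P p -> (\big[minn/x0]_(q | P q) F q <= F p)%nat.
Proof.
move=> Pp; rewrite /index_enum; move: (mem_index_enum p); rewrite /index_enum.
elim: (locked_with _ _) => // a s IH; rewrite in_cons big_cons.
case/orP => [/eqP <-|pin]; first by rewrite Pp geq_minl.
by case: (P a); rewrite ?IH // (leq_trans (geq_minr _ _)) ?IH.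
Qed.

Lemma pd_eq (i : 'I_24) :
  partial_distance (fun u : bitvec 24 => u *m A24) i = nth 0%nat pd24 i.
Proof.
have wti : wt (row i A24) = nth 0%nat pd24 i.
  by rewrite wt_bits bits_row wt_i.
apply/eqP; rewrite eqn_leq; apply/andP; split.
  pose y : bitvec 24 := delta_mx 0 i.
  have P0 : pd_pair i 0 y.
    apply/andP; split; apply/forallP => j; apply/implyP.
      move=> ji; rewrite !mxE.
      have -> : (j == i) = false.
        by apply/negbTE; rewrite -(inj_eq val_inj) neq_ltn ji.
      by rewrite andbF.
    move=> /eqP ji; have -> : j = i by apply/val_inj.
    by rewrite /y !mxE eqxx andbT.
  apply: leq_trans (@bigmin_le _ _ _ _ (0, y) P0) _ => /=.
  by rewrite dH_wt -mulmxBl subr0 /y -rowE wti.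
apply: (big_ind (fun m => nth 0%nat pd24 i <= m)%nat).
- by move: (ltn_ord i); case: (nat_of_ord i) => [|[|[|[|[|[|[|[|[|[|[|[|[|[|[|[|[|[|[|[|[|[|[|[|]]]]]]]]]]]]]]]]]]]]]]]].
- by move=> a b ha hb; rewrite leq_min ha hb.
move=> [x y] /= /andP[/forallP H1 /forallP H2].
rewrite dH_wt -mulmxBl; apply: lb.
  move/implyP: (H2 i); rewrite eqxx => /(_ isT) /andP[/eqP hx /eqP hy].
  by rewrite !mxE hx hy subr0.
move=> j ji; move/implyP: (H1 j) => /(_ ji) /eqP e.
by rewrite !mxE e subrr.
Qed.

Theorem mainTheorem12 :
  (exists A : 'M['F_2]_24,
      A \in unitmx /\
      (forall i : 'I_24,
          partial_distance (fun u : bitvec 24 => mulmx u A) i = nth 0%N pd24 i)) /\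
  (forall M : R, is_max_exponent 24 M ->
      Rle (exponent_of_seq 24 (fun i => nth 0%N pd24 i)) M).
Proof.
split; first by exists A24; split; [exact: A_unit | exact: pd_eq].
move=> M [_ Hmax].
have bij : bijective (fun u : bitvec 24 => u *m A24).
  by exists (fun u => u *m invmx A24) => u; rewrite ?mulmxK ?mulmxKV //; exact: A_unit.
have := Hmax _ bij; rewrite /kernel_exponent /exponent_of_seq.
by under eq_bigr => i _ do rewrite pd_eq.
Qed.
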